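(* Let $0\leq\nu<\frac12$. Then for all $x>0$, \[ \Big(\frac{x}{x+\frac12-\nu}\Big)^{\nu+\frac12}<\sqrt{\frac{2x}{\pi}}\,\mathrm{e}^{x}K_\nu(x)<1 . \]
   Context: $K_\nu$ denotes the modified Bessel function of the second kind. *)

(* Defs.v *)
From Stdlib Require Import Reals.
From Coquelicot Require Import Coquelicot.
Open Scope R_scope.

(* Modified Bessel function of the second kind, for x > 0 and real order nu,
   via the standard integral representation
   K_nu(x) = \int_0^\infty exp(-x cosh t) cosh(nu t) dt
   (the integral converges absolutely for every x > 0). *)
Definition BesselK (nu x : R) : R :=
  RInt_gen (fun t => exp (- x * cosh t) * cosh (nu * t))
           (at_point 0) (Rbar_locally p_infty).

(* Main.v *)
Require Import Defs.
From Stdlib Require Import Reals Lra.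
From Coquelicot Require Import Coquelicot.
Open Scope R_scope.


Definition tends (F : R -> R) (l : R) :=
  forall eps, 0 < eps -> exists M, forall b, M <= b -> Rabs (F b - l) < eps.

Lemma RInt_gen_of_tends (f : R -> R) l :
  tends (fun b => RInt f 0 b) l -> (forall t, continuous f t) ->
  RInt_gen f (at_point 0) (Rbar_locally p_infty) = l.
Proof.
intros Ht Hc. apply is_RInt_gen_unique.
intros P [eps HP].
destruct (Ht eps (cond_pos eps)) as [M HM].
apply (Filter_prod _ _ _ (fun a => a = 0) (fun b => M < b)).
- reflexivity.
- exists M. auto.
- intros a b -> Hb. simpl. exists (RInt f 0 b). split.
  + apply RInt_correct. apply ex_RInt_continuous. intros; apply Hc.
  + apply HP. apply HM. lra.
Qed.

Lemma tends_le F G l1 l2 : tends F l1 -> tends G l2 ->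
  (exists M, forall b, M <= b -> F b <= G b) -> l1 <= l2.
Proof.
intros HF HG [M HM].
destruct (Rle_or_lt l1 l2) as [|H]; [assumption|exfalso].
set (e := (l1 - l2)/2).
assert (He : 0 < e) by (unfold e; lra).
destruct (HF e He) as [M1 H1]. destruct (HG e He) as [M2 H2].
set (b := Rmax M (Rmax M1 M2)).
assert (b1 : M <= b) by (unfold b; apply Rmax_l).
assert (b2 : M1 <= b) by (unfold b; eapply Rle_trans; [|apply Rmax_r]; apply Rmax_l).
assert (b3 : M2 <= b) by (unfold b; eapply Rle_trans; [|apply Rmax_r]; apply Rmax_r).
specialize (HM b b1). specialize (H1 b b2). specialize (H2 b b3).
apply Rabs_def2 in H1. apply Rabs_def2 in H2. unfold e in *. lra.
Qed.

Lemma tends_sup (F : R -> R) B :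
  (forall a b, 0 <= a <= b -> F a <= F b) -> (forall b, 0 <= b -> F b <= B) ->
  exists l, tends F l /\ (forall b, 0 <= b -> F b <= l).
Proof.
intros Hinc Hb.
destruct (completeness (fun y => exists b, 0 <= b /\ y = F b)) as [l [Hub Hlub]].
- exists B. intros y [b [hb ->]]. auto.
- exists (F 0). exists 0. split; [lra|reflexivity].
- exists l. assert (Hle : forall b, 0 <= b -> F b <= l).
  { intros b hb. apply Hub. exists b. auto. }
  split; [|exact Hle].
  intros eps Heps.
  destruct (Rlt_or_le (l - eps) (F 0)) as [H0|H0].
  + exists 0. intros b hb. assert (F 0 <= F b) by (apply Hinc; lra).
    specialize (Hle b hb). rewrite Rabs_left1; lra.
  + assert (exists b, 0 <= b /\ l - eps < F b) as [b0 [hb0 Hb0]].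
    { apply Classical_Prop.NNPP. intro Hn.
      assert (l <= l - eps); [|lra].
      apply Hlub. intros y [b [hb ->]].
      destruct (Rle_or_lt (F b) (l - eps)) as [|Hlt]; [assumption|].
      exfalso; apply Hn; exists b; auto. }
    exists b0. intros b hb. assert (F b0 <= F b) by (apply Hinc; lra).
    specialize (Hle b ltac:(lra)). rewrite Rabs_left1; lra.
Qed.

Definition gf (v : R) := exp (- (v * v)).
Definition Gs (c : R) := RInt gf 0 c.
Definition hq (u t : R) := exp (- (u * u) * (1 + t * t)) / (1 + t * t).
Definition Hq (u : R) := RInt (fun t => hq u t) 0 1.

Lemma gf_cont t : continuous gf t.
Proof. apply (ex_derive_continuous (K:=R_AbsRing) (V:=R_NormedModule)). unfold gf. auto_derive. auto. Qed.

Lemma Gs_derive t : is_derive Gs t (gf t).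
Proof.
apply is_derive_RInt with (a := 0).
- apply filter_forall. intros b. apply RInt_correct, ex_RInt_continuous.
  intros; apply gf_cont.
- apply gf_cont.
Qed.

Lemma opp_pos_sq t : 0 < 1 + t * t.
Proof. nra. Qed.

Lemma hq_cont u t : continuous (fun t => hq u t) t.
Proof. apply (ex_derive_continuous (K:=R_AbsRing) (V:=R_NormedModule)). unfold hq. auto_derive.
  pose proof (opp_pos_sq t). lra. Qed.

Lemma hq_dx u t : is_derive (fun z => hq z t) u (-2 * u * exp (- (u * u) * (1 + t * t))).
Proof. unfold hq. auto_derive. pose proof (opp_pos_sq t). lra.
  field. pose proof (opp_pos_sq t). lra. Qed.

Lemma Derive_hq u t : Derive (fun z => hq z t) u = -2 * u * exp (- (u * u) * (1 + t * t)).
Proof. apply is_derive_unique, hq_dx. Qed.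

Lemma Hq_derive u : is_derive Hq u (-2 * exp (- (u * u)) * Gs u).
Proof.
assert (H := is_derive_RInt_param hq 0 1 u).
unfold Hq.
replace (-2 * exp (- (u * u)) * Gs u)
  with (RInt (fun t => Derive (fun z => hq z t) u) 0 1).
- apply H.
  + apply filter_forall. intros x t _. eexists. apply hq_dx.
  + intros t _. eapply continuity_2d_pt_ext.
    { intros x y. symmetry. apply Derive_hq. }
    apply continuity_2d_pt_mult.
    * apply continuity_2d_pt_mult. apply continuity_2d_pt_const. apply continuity_2d_pt_id1.
    * apply continuity_1d_2d_pt_comp with (f := exp).
      { apply derivable_continuous_pt. apply derivable_pt_exp. }
      apply continuity_2d_pt_mult.
      { apply continuity_2d_pt_opp. apply continuity_2d_pt_mult; apply continuity_2d_pt_id1. }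
      apply continuity_2d_pt_plus. apply continuity_2d_pt_const.
      apply continuity_2d_pt_mult; apply continuity_2d_pt_id2.
  + apply filter_forall. intros y. apply (ex_RInt_continuous (V:=R_CompleteNormedModule)). intros; apply hq_cont.
- rewrite (RInt_ext _ (fun t => scal (-2 * exp (- (u*u))) (scal u (gf (u * t + 0))))).
  2:{ intros t _. rewrite Derive_hq. unfold gf, scal; simpl.
      unfold mult; simpl. replace (-(u*u)*(1+t*t)) with (-(u*u) + - ((u*t+0)*(u*t+0))) by ring. rewrite exp_plus. ring. }
  rewrite (RInt_scal (V:=R_CompleteNormedModule)).
  2:{ apply (ex_RInt_continuous (V:=R_CompleteNormedModule)). intros. unfold gf, scal; simpl; unfold mult; simpl. apply (ex_derive_continuous (K:=R_AbsRing) (V:=R_NormedModule) (fun t => u * exp (- ((u*t+0)*(u*t+0))))).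
      auto_derive. auto. }
  rewrite (RInt_comp_lin (V:=R_CompleteNormedModule)).
  2:{ apply (ex_RInt_continuous (V:=R_CompleteNormedModule)). intros; apply gf_cont. }
  unfold Gs, scal; simpl; unfold mult; simpl. f_equal. f_equal; ring.
Qed.

Lemma Hq0 : Hq 0 = PI / 4.
Proof.
unfold Hq. rewrite (RInt_ext _ (fun t => / (1 + t ^ 2))).
2:{ intros t _. unfold hq. replace (- (0 * 0) * (1 + t * t)) with 0 by ring.
    rewrite exp_0. simpl. field. pose proof (opp_pos_sq t). lra. }
rewrite (is_RInt_unique _ 0 1 (atan 1 - atan 0)).
- rewrite atan_1, atan_0. lra.
- apply (is_RInt_derive (V:=R_CompleteNormedModule) atan).
  + intros x _. apply is_derive_Reals. apply derivable_pt_lim_atan.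
  + intros x _. apply (ex_derive_continuous (K:=R_AbsRing) (V:=R_NormedModule)).
    auto_derive. pose proof (opp_pos_sq x). simpl. lra.
Qed.

Lemma Gs_Hq t : 0 <= t -> Gs t * Gs t + Hq t = PI / 4.
Proof.
intros Ht. destruct (Req_dec t 0) as [->|Hn].
- unfold Gs. rewrite RInt_point, Hq0. unfold zero; simpl. ring.
- set (K := fun s => Gs s * Gs s + Hq s).
  destruct (MVT_cor2 K (fun _ => 0) 0 t) as [c [Hc _]].
  + lra.
  + intros c _. apply is_derive_Reals. unfold K.
    evar (d : R). replace 0 with d.
    * apply (is_derive_plus (K:=R_AbsRing) (V:=R_NormedModule)).
      apply (is_derive_mult (K:=R_AbsRing)). apply Gs_derive. apply Gs_derive.
      intros; apply Rmult_comm. apply Hq_derive.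
    * unfold d, gf, plus, mult; simpl; unfold mult; simpl. ring.
  + unfold K in Hc. rewrite <- Hq0. unfold Gs at 3 4 in Hc. rewrite RInt_point in Hc.
    unfold zero in Hc; simpl in Hc. unfold K. lra.
Qed.

Lemma Hq_bound t : 0 <= Hq t <= exp (- (t * t)).
Proof.
unfold Hq. split.
- apply RInt_ge_0. lra. apply (ex_RInt_continuous (V:=R_CompleteNormedModule)). intros; apply hq_cont.
  intros x _. unfold hq. pose proof (opp_pos_sq x). pose proof (exp_pos (- (t * t) * (1 + x * x))).
  apply Rlt_le, Rdiv_lt_0_compat; lra.
- replace (exp (- (t * t))) with (RInt (fun _ => exp (- (t * t))) 0 1).
  2:{ rewrite RInt_const. unfold scal; simpl; unfold mult; simpl. ring. }
  apply RInt_le. lra. apply (ex_RInt_continuous (V:=R_CompleteNormedModule)). intros; apply hq_cont.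
  apply ex_RInt_const.
  intros x Hx. unfold hq. pose proof (opp_pos_sq x).
  assert (exp (- (t * t) * (1 + x * x)) <= exp (- (t * t))).
  { apply exp_le_3 || idtac. destruct (Req_dec (- (t * t) * (1 + x * x)) (- (t * t))) as [E|E].
    rewrite E; lra. left. apply exp_increasing. assert (0 <= t * t) by nra. nra. }
  apply Rmult_le_reg_r with (1 + x * x). lra.
  unfold Rdiv. rewrite Rmult_assoc, Rinv_l by lra.
  assert (0 <= exp (- (t * t))) by (left; apply exp_pos). nra.
Qed.

Lemma Gs_ge0 t : 0 <= t -> 0 <= Gs t.
Proof.
intros Ht. apply RInt_ge_0. auto. apply (ex_RInt_continuous (V:=R_CompleteNormedModule)).
intros; apply gf_cont. intros; left; apply exp_pos.
Qed.

Lemma exp_small t : 0 <= t -> exp (- t) <= / (1 + t).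
Proof.
intros Ht. rewrite exp_Ropp. apply Rinv_le_contravar. lra. apply exp_ineq1_le.
Qed.

Lemma Gs_tends : tends Gs (sqrt PI / 2).
Proof.
intros eps Heps.
assert (Hpi : 0 < sqrt PI / 2) by (assert (0 < sqrt PI) by (apply sqrt_lt_R0, PI_RGT_0); lra).
set (c := sqrt PI / 2). assert (Hc0 : 0 < c) by exact Hpi. clear Hpi.
exists (Rmax 1 (/ (eps * c))). intros b Hb.
assert (Hb1 : 1 <= b) by (eapply Rle_trans; [apply Rmax_l|apply Hb]).
assert (Hb2 : / (eps * c) <= b) by (eapply Rle_trans; [apply Rmax_r|apply Hb]).
pose proof (Gs_Hq b ltac:(lra)) as E. pose proof (Hq_bound b) as [H1 H2].
pose proof (Gs_ge0 b ltac:(lra)) as G0.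
assert (Hc2 : c * c = PI / 4).
{ unfold c. replace (sqrt PI / 2 * (sqrt PI / 2)) with (sqrt PI * sqrt PI / 4) by field.
  rewrite sqrt_sqrt. reflexivity. left; apply PI_RGT_0. }
assert (Hd : Rabs (Gs b - c) * (Gs b + c) = Hq b).
{ assert (Gs b + c >= 0) by lra. rewrite <- (Rabs_right (Gs b + c)) by assumption. rewrite <- Rabs_mult.
  replace ((Gs b - c) * (Gs b + c)) with (- Hq b) by nra. rewrite Rabs_Ropp. apply Rabs_right; lra. }
assert (He : exp (- (b * b)) < / b).
{ eapply Rle_lt_trans. apply exp_small. nra. apply Rinv_lt_contravar. nra. nra. }
assert (Hinv : / b <= eps * c).
{ rewrite <- (Rinv_inv (eps * c)). apply Rinv_le_contravar. apply Rinv_0_lt_compat. nra. auto. }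
assert (Rabs (Gs b - c) * c <= Hq b).
{ rewrite <- Hd. apply Rmult_le_compat_l. apply Rabs_pos. lra. }
apply Rmult_lt_reg_r with c. lra. 
assert (Hq b < eps * c) by lra.
lra.
Qed.

Ltac cont := apply (ex_derive_continuous (K:=R_AbsRing) (V:=R_NormedModule)); unfold cosh, sinh; auto_derive; auto.

Lemma cosh_half t : cosh t = 1 + 2 * (sinh (t / 2) * sinh (t / 2)).
Proof.
unfold cosh, sinh. replace t with (t/2 + t/2) at 1 2 by field.
rewrite Ropp_plus_distr, !exp_plus.
assert (exp (t/2) * exp (- (t/2)) = 1) by (rewrite <- exp_plus; replace (t/2 + - (t/2)) with 0 by ring; apply exp_0).
field_simplify. nra.
Qed.

Lemma sinh_ge t : 0 <= t -> t / 2 <= sinh t.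
Proof.
intros Ht. unfold sinh. pose proof (exp_ineq1_le t).
assert (exp (- t) <= 1). { rewrite <- exp_0. destruct (Req_dec t 0) as [->|]. rewrite Ropp_0; lra.
  left; apply exp_increasing; lra. }
lra.
Qed.

Section Gpart.
Variable x : R.
Hypothesis hx : 0 < x.

Definition gh (t : R) := exp (- x * cosh t) * cosh (t / 2).
Definition sg (t : R) := sqrt (2 * x) * sinh (t / 2).
Definition dsg (t : R) := sqrt (2 * x) * cosh (t / 2) / 2.
Definition Cg := exp (- x) * (2 / sqrt (2 * x)).

Lemma sq2x : 0 < sqrt (2 * x).
Proof. apply sqrt_lt_R0. lra. Qed.

Lemma gh_eq t : gh t = Cg * scal (dsg t) (gf (sg t)).
Proof.
unfold gh, Cg, dsg, gf, sg, scal; simpl; unfold mult; simpl.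
rewrite (cosh_half t).
assert (Hs : sqrt (2 * x) * sqrt (2 * x) = 2 * x) by (apply sqrt_sqrt; lra).
replace (- x * (1 + 2 * (sinh (t / 2) * sinh (t / 2))))
  with (- x + - (sqrt (2 * x) * sinh (t / 2) * (sqrt (2 * x) * sinh (t / 2)))).
2:{ replace (sqrt (2 * x) * sinh (t / 2) * (sqrt (2 * x) * sinh (t / 2))) with
     ((sqrt (2 * x) * sqrt (2 * x)) * (sinh (t / 2) * sinh (t / 2))) by ring. rewrite Hs. ring. }
rewrite exp_plus. pose proof sq2x. field. lra.
Qed.

Lemma RInt_gh b : RInt gh 0 b = Cg * Gs (sg b).
Proof.
rewrite (RInt_ext _ (fun t => scal Cg (scal (dsg t) (gf (sg t))))).
2:{ intros; rewrite gh_eq; reflexivity. }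
rewrite (RInt_scal (V:=R_CompleteNormedModule)).
2:{ apply (ex_RInt_continuous (V:=R_CompleteNormedModule)). intros.
    unfold scal; simpl; unfold mult; simpl; unfold dsg, gf, sg.
    cont. }
rewrite (RInt_comp (V:=R_CompleteNormedModule)).
- unfold Gs, scal; simpl; unfold mult; simpl. unfold sg at 1.
  replace (0/2) with 0 by field. unfold sinh. rewrite Ropp_0, exp_0.
  replace ((1 - 1) / 2) with 0 by field. rewrite Rmult_0_r. reflexivity.
- intros; apply gf_cont.
- intros t _. split.
  + unfold sg, dsg. apply is_derive_Reals.
    evar (d : R). replace (sqrt (2 * x) * cosh (t / 2) / 2) with d.
    apply derivable_pt_lim_scal.
    apply (derivable_pt_lim_comp (fun t => t / 2) sinh t (/2) (cosh (t/2))).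
    * apply is_derive_Reals. auto_derive. auto. field.
    * apply derivable_pt_lim_sinh.
    * unfold d. field.
  + unfold dsg. cont.
Qed.

Definition Jv := exp (- x) * sqrt PI / sqrt (2 * x).

Lemma gh_tends : tends (fun b => RInt gh 0 b) Jv.
Proof.
intros eps Heps.
assert (HC : 0 < Cg). { unfold Cg. pose proof sq2x. pose proof (exp_pos (-x)).
  apply Rmult_lt_0_compat. auto. apply Rdiv_lt_0_compat; lra. }
destruct (Gs_tends (eps / Cg)) as [M HM]. apply Rdiv_lt_0_compat; lra.
exists (Rmax 0 (4 * M / sqrt (2 * x))). intros b Hb.
assert (Hb0 : 0 <= b) by (eapply Rle_trans; [apply Rmax_l|apply Hb]).
assert (Hb1 : 4 * M / sqrt (2 * x) <= b) by (eapply Rle_trans; [apply Rmax_r|apply Hb]).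
rewrite RInt_gh.
assert (Hs : M <= sg b).
{ unfold sg. pose proof sq2x. pose proof (sinh_ge (b/2) ltac:(lra)).
  assert (4 * M <= b * sqrt (2 * x)).
  { apply Rmult_le_compat_r with (r := sqrt (2 * x)) in Hb1; [|lra].
    unfold Rdiv in Hb1. rewrite Rmult_assoc, Rinv_l in Hb1 by lra. lra. }
  nra. }
specialize (HM _ Hs).
replace Jv with (Cg * (sqrt PI / 2)).
2:{ unfold Cg, Jv. pose proof sq2x. field. lra. }
rewrite <- Rmult_minus_distr_l, Rabs_mult, Rabs_right by lra.
apply Rmult_lt_compat_l with (r := Cg) in HM; [|lra].
replace (Cg * (eps / Cg)) with eps in HM by (field; lra). lra.
Qed.

End Gpart.

Lemma cosh_pos' t : 0 < cosh t.
Proof. unfold cosh. pose proof (exp_pos t). pose proof (exp_pos (- t)). lra. Qed.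

Lemma exp_opp_mul t : exp t * exp (- t) = 1.
Proof. rewrite <- exp_plus. replace (t + - t) with 0 by ring. apply exp_0. Qed.

Lemma cosh_sinh_sq t : cosh t * cosh t = 1 + sinh t * sinh t.
Proof. unfold cosh, sinh. pose proof (exp_opp_mul t). nra. Qed.

Lemma sinh_2 t : sinh (2 * t) = 2 * sinh t * cosh t.
Proof.
unfold cosh, sinh. replace (2 * t) with (t + t) by ring. rewrite Ropp_plus_distr, !exp_plus.
field.
Qed.

Lemma cosh_2 t : cosh (2 * t) = 1 + 2 * (sinh t * sinh t).
Proof. rewrite cosh_half. f_equal. replace (2 * t / 2) with t by field. reflexivity. Qed.

Lemma sinh_nonneg t : 0 <= t -> 0 <= sinh t.
Proof. intros. pose proof (sinh_ge t H). lra. Qed.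

Lemma sinh_pos t : 0 < t -> 0 < sinh t.
Proof. intros. pose proof (sinh_ge t (Rlt_le _ _ H)). lra. Qed.

Lemma cosh_lt a b : 0 <= a < b -> cosh a < cosh b.
Proof.
intros [Ha Hab]. unfold cosh. rewrite !exp_Ropp.
assert (HA : 1 <= exp a) by (pose proof (exp_ineq1_le a); lra).
assert (HB : exp a < exp b) by (apply exp_increasing; lra).
set (A := exp a) in *. set (B := exp b) in *.
assert (B - A + / B - / A = (B - A) * (1 - / (A * B))).
{ field. split; lra. }
assert (/ (A * B) < 1).
{ rewrite <- Rinv_1. apply Rinv_lt_contravar. nra. nra. }
nra.
Qed.

Lemma psi_nonneg p t : 0 <= p <= 1 -> 0 <= t ->
  p * sinh t * cosh (p * t) <= sinh (p * t) * cosh t.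
Proof.
intros Hp Ht. destruct (Req_dec t 0) as [->|Hn].
- rewrite Rmult_0_r. unfold sinh. rewrite Ropp_0, exp_0. lra.
- set (psi := fun s => sinh (p * s) * cosh s - p * sinh s * cosh (p * s)).
  destruct (MVT_cor2 psi (fun s => (1 - p * p) * sinh (p * s) * sinh s) 0 t) as [c [Hc [Hc1 Hc2]]].
  + lra.
  + intros c _. apply is_derive_Reals. unfold psi, cosh, sinh. auto_derive. auto. field.
  + assert (psi 0 = 0). { unfold psi. rewrite Rmult_0_r. unfold sinh. rewrite Ropp_0, exp_0. lra. }
    assert (0 <= (1 - p * p) * sinh (p * c) * sinh c).
    { apply Rmult_le_pos. apply Rmult_le_pos. nra. apply sinh_nonneg; nra. apply sinh_nonneg; lra. }
    unfold psi in *. nra.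
Qed.

Definition phi (p t : R) :=
  ln (cosh (p * t)) + (1 + p) / 2 * ln (p + (1 - p) * cosh (2 * t)) - ln (cosh t).

Lemma Bpos p t : 0 <= p <= 1 -> 0 < p + (1 - p) * cosh (2 * t).
Proof.
intros Hp. rewrite cosh_2. assert (0 <= sinh t * sinh t) by nra. nra.
Qed.

Lemma phi_derive p t : 0 <= p <= 1 ->
  is_derive (phi p) t (p * sinh (p * t) / cosh (p * t)
     + (1 + p) * (1 - p) * sinh (2 * t) / (p + (1 - p) * cosh (2 * t))
     - sinh t / cosh t).
Proof.
intros Hp. pose proof (cosh_pos' (p * t)). pose proof (cosh_pos' t). pose proof (Bpos p t Hp).
unfold phi. revert H H0 H1. unfold cosh, sinh. intros H H0 H1. auto_derive.
- unfold Rdiv in *. repeat split; auto.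
- field. repeat split; lra.
Qed.

Lemma phi_deriv_pos p t : 0 <= p < 1 -> 0 < t ->
  0 < p * sinh (p * t) / cosh (p * t)
     + (1 + p) * (1 - p) * sinh (2 * t) / (p + (1 - p) * cosh (2 * t))
     - sinh t / cosh t.
Proof.
intros Hp Ht.
pose proof (cosh_pos' (p * t)) as Hc. pose proof (cosh_pos' t) as HC.
pose proof (Bpos p t ltac:(lra)) as HD.
pose proof (psi_nonneg p t ltac:(lra) ltac:(lra)) as Hpsi.
pose proof (sinh_pos t Ht) as HS.
rewrite sinh_2. rewrite cosh_2 in *.
pose proof (cosh_sinh_sq t) as Hcs.
set (S := sinh t) in *. set (C := cosh t) in *. set (s := sinh (p * t)) in *. set (c := cosh (p * t)) in *.
set (D := p + (1 - p) * (1 + 2 * (S * S))) in *.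
assert (Hts : p * S / C <= s / c).
{ apply Rmult_le_reg_r with (C * c). nra. replace (p*S/C*(C*c)) with (p*S*c) by (field; lra).
  replace (s/c*(C*c)) with (s*C) by (field; lra). lra. }
assert (Hmain : 0 < (1 + p) * (1 - p) * (2 * S * C) / D - (1 - p * p) * S / C).
{ replace ((1 + p) * (1 - p) * (2 * S * C) / D - (1 - p * p) * S / C)
    with ((1 - p * p) * S * (2 * (C * C) - D) / (C * D)).
  2:{ field. split; lra. }
  replace (2 * (C * C) - D) with (1 + 2 * p * (S * S)) by (unfold D; rewrite Hcs; ring).
  apply Rdiv_lt_0_compat. apply Rmult_lt_0_compat. apply Rmult_lt_0_compat. nra. auto.
  assert (0 <= p * (S * S)) by (apply Rmult_le_pos; nra). lra. nra. }
assert (p * (p * S / C) <= p * (s / c)) by (apply Rmult_le_compat_l; lra).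
replace (p * s / c) with (p * (s / c)) by (field; lra).
replace (S / C) with (p * (p * S / C) + (1 - p * p) * S / C) by (field; lra).
lra.
Qed.

Lemma phi_pos p t : 0 <= p < 1 -> 0 < t -> 0 < phi p t.
Proof.
intros Hp Ht.
destruct (MVT_cor2 (phi p) (fun t => p * sinh (p * t) / cosh (p * t)
     + (1 + p) * (1 - p) * sinh (2 * t) / (p + (1 - p) * cosh (2 * t))
     - sinh t / cosh t) 0 t Ht) as [c [Hc [Hc1 Hc2]]].
- intros c _. apply is_derive_Reals. apply phi_derive. lra.
- assert (phi p 0 = 0).
  { unfold phi. rewrite !Rmult_0_r. unfold cosh. rewrite Ropp_0, exp_0.
    replace ((1 + 1) / 2) with 1 by field. rewrite ln_1. replace (p + (1 - p) * 1) with 1 by ring.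
    rewrite ln_1. ring. }
  pose proof (phi_deriv_pos p c Hp Hc1). nra.
Qed.

Section Main.
Variables nu x : R.
Hypothesis hnu0 : 0 <= nu.
Hypothesis hnu1 : nu < 1/2.
Hypothesis hx : 0 < x.

Definition aa := nu + 1/2.
Definition kk := 2 - 4 * nu.
Definition AA := (x + 1/2 - nu) / x.
Definition c0 := Rpower (x / (x + 1/2 - nu)) (nu + 1/2).
Definition fnu (t : R) := exp (- x * cosh t) * cosh (nu * t).
Definition qq (t : R) := exp (- x * cosh t) * cosh (t / 2) * (sinh (t / 2) * sinh (t / 2) - / (4 * x)).
Definition K1 := c0 * aa * kk / AA.
Definition ell (t : R) := c0 * gh x t - K1 * qq t.

Lemma AA_pos : 0 < AA.
Proof. unfold AA. apply Rdiv_lt_0_compat; lra. Qed.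

Lemma c0_eq : c0 = exp (- aa * ln AA).
Proof.
unfold c0, Rpower, aa, AA. f_equal.
replace (x / (x + 1/2 - nu)) with (/ ((x + 1/2 - nu) / x)) by (field; split; lra).
rewrite ln_Rinv. ring. apply Rdiv_lt_0_compat; lra.
Qed.

Lemma c0_pos : 0 < c0.
Proof. rewrite c0_eq. apply exp_pos. Qed.

Lemma lower_pt t : 0 < t -> ell t < fnu t.
Proof.
intros Ht.
pose proof (phi_pos (2 * nu) (t / 2) ltac:(lra) ltac:(lra)) as Hphi.
unfold phi in Hphi.
replace (2 * nu * (t / 2)) with (nu * t) in Hphi by field.
replace (2 * (t / 2)) with t in Hphi by field.
replace ((1 + 2 * nu) / 2) with aa in Hphi by (unfold aa; field).
set (B := 2 * nu + (1 - 2 * nu) * cosh t) in *.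
assert (HB : B = 1 + kk * (sinh (t / 2) * sinh (t / 2))).
{ unfold B, kk. rewrite (cosh_half t). ring. }
assert (HBpos : 0 < B) by (unfold B; pose proof (Bpos (2 * nu) (t/2) ltac:(lra)) as H;
   replace (2 * (t/2)) with t in H by field; exact H).
pose proof (cosh_pos' (nu * t)) as Hc1. pose proof (cosh_pos' (t / 2)) as Hc2.
pose proof AA_pos as HA.
assert (H1 : cosh (t / 2) * exp (- aa * ln B) < cosh (nu * t)).
{ rewrite <- (exp_ln (cosh (nu * t))) by auto. rewrite <- (exp_ln (cosh (t / 2))) at 1 by auto.
  rewrite <- exp_plus. apply exp_increasing. lra. }
assert (H2 : ln B - ln AA <= B / AA - 1).
{ rewrite <- ln_div by auto. pose proof (exp_ineq1_le (ln (B / AA))).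
  rewrite exp_ln in H. lra. apply Rdiv_lt_0_compat; auto. }
assert (Haa : 0 < aa) by (unfold aa; lra).
assert (H3 : c0 * (1 - aa * (B / AA - 1)) <= exp (- aa * ln B)).
{ replace (- aa * ln B) with (- aa * ln AA + - aa * (ln B - ln AA)) by ring.
  rewrite exp_plus, <- c0_eq. apply Rmult_le_compat_l. left; apply c0_pos.
  pose proof (exp_ineq1_le (- aa * (ln B - ln AA))). nra. }
assert (H4 : cosh (t / 2) * (c0 * (1 - aa * (B / AA - 1))) < cosh (nu * t)).
{ eapply Rle_lt_trans; [|exact H1]. apply Rmult_le_compat_l; lra. }
pose proof (exp_pos (- x * cosh t)) as HE.
unfold ell, fnu, gh, qq, K1.
apply Rmult_lt_compat_l with (r := exp (- x * cosh t)) in H4; auto.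
eapply Rle_lt_trans; [|exact H4]. right.
rewrite HB. unfold AA, kk. field. split; lra.
Qed.

End Main.

Lemma tends_affine F l c d : tends F l -> tends (fun b => c * F b + d) (c * l + d).
Proof.
intros H eps He.
destruct (H (eps / (Rabs c + 1))) as [M HM].
{ apply Rdiv_lt_0_compat. auto. pose proof (Rabs_pos c); lra. }
exists M. intros b Hb. specialize (HM b Hb).
replace (c * F b + d - (c * l + d)) with (c * (F b - l)) by ring.
rewrite Rabs_mult. pose proof (Rabs_pos c). pose proof (Rabs_pos (F b - l)).
apply Rle_lt_trans with ((Rabs c + 1) * Rabs (F b - l)). nra.
apply Rmult_lt_compat_l with (r := Rabs c + 1) in HM; [|lra].
replace ((Rabs c + 1) * (eps / (Rabs c + 1))) with eps in HM by (field; lra). lra.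
Qed.

Lemma tends_const c : tends (fun _ => c) c.
Proof. intros eps He. exists 0. intros. rewrite Rminus_diag, Rabs_R0. auto. Qed.

Lemma ex_RInt_c (f : R -> R) a b : (forall t, continuous f t) -> ex_RInt f a b.
Proof. intros H. apply (ex_RInt_continuous (V:=R_CompleteNormedModule)). intros; apply H. Qed.

Lemma RInt_mono f a b : (forall t, continuous f t) -> (forall t, 0 <= t -> 0 <= f t) ->
  0 <= a <= b -> RInt f 0 a <= RInt f 0 b.
Proof.
intros Hc Hp Hab.
rewrite <- (RInt_Chasles f 0 a b) by (apply ex_RInt_c; auto).
unfold plus; simpl.
assert (0 <= RInt f a b). { apply RInt_ge_0. lra. apply ex_RInt_c; auto. intros; apply Hp; lra. }
lra.
Qed.

Lemma int_gap f g : (forall t, continuous f t) -> (forall t, continuous g t) ->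
  (forall t, 0 < t -> g t < f t) ->
  exists d, 0 < d /\ forall b, 1 <= b -> RInt g 0 b + d <= RInt f 0 b.
Proof.
intros Hf Hg Hlt.
exists (RInt f 0 1 - RInt g 0 1). split.
- assert (RInt g 0 1 < RInt f 0 1). { apply RInt_lt. lra. intros; apply Hf. intros; apply Hg.
    intros; apply Hlt; lra. } lra.
- intros b Hb.
  rewrite <- (RInt_Chasles f 0 1 b) by (apply ex_RInt_c; auto).
  rewrite <- (RInt_Chasles g 0 1 b) by (apply ex_RInt_c; auto).
  unfold plus; simpl.
  assert (RInt g 1 b <= RInt f 1 b). { apply RInt_le. lra. apply ex_RInt_c; auto. apply ex_RInt_c; auto.
    intros; left; apply Hlt; lra. }
  lra.
Qed.


Section Final.
Variables nu x : R.
Hypothesis hnu0 : 0 <= nu.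
Hypothesis hnu1 : nu < 1/2.
Hypothesis hx : 0 < x.

Lemma fnu_cont t : continuous (fnu nu x) t.
Proof. unfold fnu. cont. Qed.
Lemma gh_cont t : continuous (gh x) t.
Proof. unfold gh. cont. Qed.
Lemma qq_cont t : continuous (qq x) t.
Proof. unfold qq. cont. Qed.
Lemma ell_cont t : continuous (ell nu x) t.
Proof. unfold ell, qq, gh. cont. Qed.

Lemma upper_pt t : 0 < t -> fnu nu x t < gh x t.
Proof.
intros Ht. unfold fnu, gh. apply Rmult_lt_compat_l. apply exp_pos.
apply cosh_lt. split. nra. nra.
Qed.

Lemma fnu_nonneg t : 0 <= fnu nu x t.
Proof. unfold fnu. left. apply Rmult_lt_0_compat. apply exp_pos. apply cosh_pos'. Qed.

Lemma gh_nonneg t : 0 <= gh x t.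
Proof. unfold gh. left. apply Rmult_lt_0_compat. apply exp_pos. apply cosh_pos'. Qed.

Lemma RInt_qq b : 0 <= b -> RInt (qq x) 0 b <= 0.
Proof.
intros Hb.
set (Q := fun t => - / (2 * x) * sinh (t / 2) * exp (- x * cosh t)).
rewrite (is_RInt_unique (qq x) 0 b (minus (Q b) (Q 0))).
- unfold minus, plus, opp; simpl. unfold Q. replace (0/2) with 0 by field.
  unfold sinh at 2. rewrite Ropp_0, exp_0. replace ((1-1)/2) with 0 by field.
  pose proof (sinh_nonneg (b/2) ltac:(lra)). pose proof (exp_pos (- x * cosh b)).
  assert (0 < / (2 * x)) by (apply Rinv_0_lt_compat; lra).
  assert (0 <= / (2 * x) * sinh (b / 2) * exp (- x * cosh b)).
  { apply Rmult_le_pos. apply Rmult_le_pos; lra. lra. }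
  lra.
- apply (is_RInt_derive (V:=R_CompleteNormedModule)).
  + intros t _.
    assert (Hd : is_derive Q t (- / (2 * x) * (cosh (t / 2) / 2 * exp (- x * cosh t)
                 + sinh (t / 2) * (- x * sinh t) * exp (- x * cosh t)))).
    { unfold Q, cosh, sinh. auto_derive. auto. unfold Rdiv. field. lra. }
    replace (qq x t) with (- / (2 * x) * (cosh (t / 2) / 2 * exp (- x * cosh t)
                 + sinh (t / 2) * (- x * sinh t) * exp (- x * cosh t))). exact Hd.
    unfold qq. assert (Hs2 : sinh t = 2 * sinh (t / 2) * cosh (t / 2)) by (rewrite <- sinh_2; f_equal; field). rewrite Hs2.
    field. lra.
  + intros; apply qq_cont.
Qed.

End Final.

Theorem corollary2p2 (nu : R) (hnu0 : 0 <= nu) (hnu1 : nu < 1/2) :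
  forall x : R, 0 < x ->
    Rpower (x / (x + 1/2 - nu)) (nu + 1/2)
      < sqrt (2 * x / PI) * exp x * BesselK nu x
    /\ sqrt (2 * x / PI) * exp x * BesselK nu x < 1.
Proof.
intros x hx.
set (Fn := fun b => RInt (fnu nu x) 0 b).
set (G := fun b => RInt (gh x) 0 b).
assert (HGt := gh_tends x hx). fold G in HGt.
assert (HGle : forall b, 0 <= b -> G b <= Jv x).
{ intros b Hb. apply (tends_le (fun _ => G b) G (G b) (Jv x)). apply tends_const. auto.
  exists b. intros b' Hb'. apply RInt_mono. apply gh_cont. intros; apply gh_nonneg. lra. }
assert (HFG : forall b, 0 <= b -> Fn b <= G b).
{ intros b Hb. apply RInt_le. auto. apply ex_RInt_c, fnu_cont. apply ex_RInt_c, gh_cont.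
  intros t Ht. left. apply upper_pt; auto. lra. }
destruct (tends_sup Fn (Jv x)) as [L [HL HLle]].
{ intros a b Hab. apply RInt_mono. apply fnu_cont. intros; apply fnu_nonneg. lra. }
{ intros b Hb. eapply Rle_trans. apply HFG; auto. apply HGle; auto. }
assert (HB : BesselK nu x = L).
{ unfold BesselK. apply RInt_gen_of_tends. exact HL. intros; apply fnu_cont. }
destruct (int_gap (gh x) (fnu nu x)) as [d1 [Hd1 Hgap1]].
{ apply gh_cont. } { apply fnu_cont. } { intros; apply upper_pt; auto. }
destruct (int_gap (fnu nu x) (ell nu x)) as [d2 [Hd2 Hgap2]].
{ apply fnu_cont. } { apply ell_cont. } { intros; apply lower_pt; auto. }
assert (HU : L <= Jv x - d1).
{ apply (tends_le Fn (fun b => 1 * G b + - d1)). auto.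
  replace (Jv x - d1) with (1 * Jv x + - d1) by ring. apply tends_affine; auto.
  exists 1. intros b Hb. specialize (Hgap1 b Hb). unfold Fn, G. lra. }
assert (HK1 : 0 <= K1 nu x).
{ unfold K1. pose proof (c0_pos nu x hnu1 hx). pose proof (AA_pos nu x hnu1 hx).
  unfold aa, kk. apply Rmult_le_pos. apply Rmult_le_pos. apply Rmult_le_pos; lra. lra.
  left; apply Rinv_0_lt_compat; lra. }
assert (HLo : c0 nu x * Jv x + d2 <= L).
{ apply (tends_le (fun b => c0 nu x * G b + d2) Fn). apply tends_affine; auto. auto.
  exists 1. intros b Hb. specialize (Hgap2 b Hb).
  assert (RInt (ell nu x) 0 b = c0 nu x * G b - K1 nu x * RInt (qq x) 0 b).
  { unfold ell, G. rewrite (RInt_minus (V:=R_CompleteNormedModule) (fun t => c0 nu x * gh x t)).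
    unfold minus, plus, opp; simpl.
    rewrite (RInt_scal (V:=R_CompleteNormedModule) (gh x)).
    rewrite (RInt_scal (V:=R_CompleteNormedModule) (qq x)).
    unfold scal; simpl; unfold mult; simpl. ring.
    apply ex_RInt_c, qq_cont. apply ex_RInt_c, gh_cont.
    apply ex_RInt_c. intros; apply (ex_derive_continuous (K:=R_AbsRing) (V:=R_NormedModule)); unfold gh, cosh; auto_derive; auto.
    apply ex_RInt_c. intros; apply (ex_derive_continuous (K:=R_AbsRing) (V:=R_NormedModule)); unfold qq, cosh, sinh; auto_derive; auto. }
  pose proof (RInt_qq x hx b ltac:(lra)).
  unfold Fn. assert (0 <= K1 nu x * - RInt (qq x) 0 b) by (apply Rmult_le_pos; lra).
  lra. }
rewrite HB.
assert (HJ : sqrt (2 * x / PI) * exp x * Jv x = 1).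
{ unfold Jv. pose proof PI_RGT_0. rewrite sqrt_div_alt by lra.
  pose proof (sqrt_lt_R0 PI H). pose proof (sq2x x hx).
  rewrite exp_Ropp. pose proof (exp_pos x). field. repeat split; lra. }
assert (Hpos : 0 < sqrt (2 * x / PI) * exp x).
{ apply Rmult_lt_0_compat. apply sqrt_lt_R0. apply Rdiv_lt_0_compat. lra. apply PI_RGT_0. apply exp_pos. }
split.
- change (Rpower (x / (x + 1/2 - nu)) (nu + 1/2)) with (c0 nu x).
  replace (c0 nu x) with (sqrt (2 * x / PI) * exp x * (c0 nu x * Jv x)).
  2:{ rewrite <- Rmult_assoc, (Rmult_comm _ (c0 nu x)), Rmult_assoc, HJ. ring. }
  apply Rmult_lt_compat_l; lra.
- rewrite <- HJ. apply Rmult_lt_compat_l; lra.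
Qed.
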